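(* Let $G$ be a finite $2$-group. (i) If $\psi'(G)>\frac{19}{43}$, then $G$ is an $M$-group; more precisely, up to isomorphism $G$ is one of: $\mathcal{C}_{2^k}$ ($k\ge 0$); $\mathcal{C}_{2^{k-1}}\times\mathcal{C}_2$ ($k\ge 2$); $M(2^k)$ ($k\ge 4$); $Q_8$ (these classes being pairwise disjoint). (ii) If $\psi'(G)=\frac{19}{43}$, then $G\simeq D_8$. (iii) If $\frac{31}{77}<\psi'(G)<\frac{19}{43}$, then $G\simeq Q_{16}$.
   Context: For a finite group $G$, $\psi(G)=\sum_{x\in G} o(x)$ and $\psi'(G)=\psi(G)/\psi(\mathcal{C}_{|G|})$, where $\mathcal{C}_n$ is the cyclic group of order $n$. A group is an $M$-group if its subgroup lattice is modular. For $k\ge 4$, $M(2^k)=\langle x,y\mid x^{2^{k-1}}=y^2=1,\ yxy^{-1}=x^{2^{k-2}+1}\rangle$. $Q_{2^k}=\langle x,y\mid x^{2^{k-2}}=y^2,\ y^4=1,\ yxy^{-1}=x^{-1}\rangle$ is the generalized quaternion group of order $2^k$ ($k\ge3$); $D_8$ is the dihedral group of order $8$. *)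

(* Defs.v *)
From mathcomp Require Import all_boot all_order all_algebra all_fingroup all_solvable.
Set Implicit Arguments. Unset Strict Implicit. Unset Printing Implicit Defensive.
Import GRing.Theory Num.Theory.

Local Open Scope group_scope.

Definition psi (gT : finGroupType) (G : {set gT}) : nat := (\sum_(x in G) #[x])%N.

(* psi(C_n): the cyclic group of order n is realized as Zp n (order n for n > 0,
   a cyclic subgroup of 'Z_n). *)
Definition psiC (n : nat) : nat := psi (Zp n).

Definition psi' (gT : finGroupType) (G : {set gT}) : rat :=
  ((psi G)%:R / (psiC #|G|)%:R)%R.

(* M-group: the subgroup lattice of G (meet = intersection, join = generated
   subgroup) is modular. *)
Definition Mgroup (gT : finGroupType) (G : {group gT}) : Prop :=
  forall H K L : {group gT}, H \subset G -> K \subset G -> L \subset G ->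
    H \subset L -> H <*> (K :&: L) = (H <*> K) :&: L.

Definition is_cyclic2 (gT : finGroupType) (G : {group gT}) (k : nat) : Prop :=
  G \isog Grp (x : x ^+ (2 ^ k)).

Definition is_cyc_x_C2 (gT : finGroupType) (G : {group gT}) (k : nat) : Prop :=
  G \isog Grp (x : y : x ^+ (2 ^ k.-1), y ^+ 2, x * y = y * x).

Definition is_M (gT : finGroupType) (G : {group gT}) (k : nat) : Prop :=
  G \isog Grp (x : y : x ^+ (2 ^ k.-1), y ^+ 2, x ^ y^-1 = x ^+ (2 ^ (k - 2) + 1)).

Definition is_Q (gT : finGroupType) (G : {group gT}) (k : nat) : Prop :=
  G \isog Grp (x : y : x ^+ (2 ^ (k - 2)) = y ^+ 2, y ^+ 4, x ^ y^-1 = x^-1).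

Definition is_D8 (gT : finGroupType) (G : {group gT}) : Prop :=
  G \isog Grp (x : y : x ^+ 4, y ^+ 2, x ^ y^-1 = x^-1).

(* Main.v *)
Require Import Defs.
From mathcomp Require Import all_boot all_order all_algebra all_fingroup all_solvable.
From mathcomp Require Import zify.
Import GRing.Theory Num.Theory.
Set Implicit Arguments. Unset Strict Implicit. Unset Printing Implicit Defensive.

Lemma S_c n c : 2 ^ n <= c ->
  3 * (\sum_(k < n) 2 ^ k * (c - 2 ^ k)) + 2 ^ n * 2 ^ n = 3 * c * (2 ^ n - 1) + 1.
Proof.
elim: n c => [|n IH] c h; first by rewrite big_ord0 /=; lia.
have h' : 2 ^ n <= c by apply: leq_trans h; rewrite leq_exp2l // leqnSn.
have := IH c h'; rewrite big_ord_recr /= expnS.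
rewrite expnS in h; have := expn_gt0 2 n.
move: (2 ^ n) (\sum_(i < n) 2 ^ i * (c - 2 ^ i)) h h' => a S h h' a0.
nia.
Qed.

Definition bnd k := if k == 0 then 1 else 2 ^ k.+1.

Lemma S_b n c : 0 < n -> 2 ^ n <= c ->
  3 * (\sum_(k < n) 2 ^ k * (c - bnd k)) + 2 * (2 ^ n * 2 ^ n) = 3 * c * (2 ^ n - 1) + 5.
Proof.
case: n => // n _; elim: n c => [|n IH] c h.
  by rewrite big_ord1 /bnd /=; rewrite expn1 in h; lia.
have h' : 2 ^ n.+1 <= c by apply: leq_trans h; rewrite leq_exp2l // leqnSn.
have E : bnd n.+1 = 2 * (2 * 2 ^ n) by rewrite /bnd /= !expnS.
have := IH c h'; rewrite (big_ord_recr n.+1) /= E.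
rewrite !expnS in h h' *; have := expn_gt0 2 n.
move: (2 ^ n) (\sum_(i < n.+1) 2 ^ i * (c - bnd i)) h h' => a S h h' a0.
case: a a0 h h' => // a _ h h'.
have [d ->] : exists d, c = 2 * (2 * a.+1) + d by exists (c - 2 * (2 * a.+1)); lia.
have -> : 2 * (2 * a.+1) + d - 2 * (2 * a.+1) = d by lia.
have -> : 2 * a.+1 - 1 = 2 * a + 1 by lia.
have -> : 2 * (2 * a.+1) - 1 = 4 * a + 3 by lia.
move=> H; nia.
Qed.

Lemma geo_sum n j : j <= n -> \sum_(k < n) 2 ^ k * (k < j) = 2 ^ j - 1.
Proof.
elim: n j => [|n IH] j.
  by rewrite leqn0 => /eqP ->; rewrite big_ord0.
rewrite leq_eqVlt => /orP [/eqP -> | ltj].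
  rewrite big_ord_recr /= ltnSn muln1.
  rewrite (eq_bigr (fun k : 'I_n => 2 ^ k * (k < n))); last first.
    by move=> k _; rewrite ltnS ltnW ?ltn_ord // ltn_ord.
  rewrite IH // expnS; have := expn_gt0 2 n; lia.
rewrite big_ord_recr /= IH // ltnNge -ltnS ltj /=; lia.
Qed.

Lemma order_sum_id (gT : finGroupType) (t : gT) n : #[t]%g %| 2 ^ n ->
  #[t]%g = 1 + \sum_(k < n) 2 ^ k * (t ^+ (2 ^ k) != 1)%g.
Proof.
case/dvdn_pfactor=> // j le_jn ot.
rewrite (eq_bigr (fun k : 'I_n => 2 ^ k * (k < j))); last first.
  by move=> k _; rewrite -order_dvdn ot dvdn_Pexp2l // ltnNge.
rewrite (geo_sum le_jn) ot; have := expn_gt0 2 j; lia.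
Qed.

Lemma sum_neq_card (gT : finGroupType) (A : {set gT}) m :
  \sum_(t in A) ((t ^+ m)%g != 1%g : nat) = #|A| - #|'Ldiv_m(A)%g|.
Proof.
have E: #|'Ldiv_m(A)%g| = \sum_(t in A) ((t ^+ m)%g == 1%g : nat).
  rewrite -sum1_card [RHS](eq_bigr (fun t => if (t ^+ m)%g == 1%g then 1 else 0)).
    by rewrite -big_mkcondr /=; apply: eq_bigl => t; rewrite !inE.
  by move=> t _; case: (_ == _).
have E2 : #|A| = \sum_(t in A) (((t ^+ m)%g == 1%g : nat) + ((t ^+ m)%g != 1%g : nat)).
  rewrite -sum1_card; apply: eq_bigr => t _; by case: (_ == _).
rewrite E E2 big_split /=; lia.
Qed.

Lemma psiE (gT : finGroupType) (A : {set gT}) n :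
  {in A, forall t, #[t]%g %| 2 ^ n} ->
  psi A = #|A| + \sum_(k < n) 2 ^ k * (#|A| - #|'Ldiv_(2 ^ k)(A)%g|).
Proof.
move=> dA; rewrite /psi (eq_bigr _ (fun t At => order_sum_id (dA t At))).
rewrite big_split /= sum1_card; congr (_ + _).
rewrite exchange_big /=; apply: eq_bigr => k _.
by rewrite -big_distrr /= sum_neq_card.
Qed.

Local Open Scope group_scope.

Lemma card_Ldiv_cycle (gT : finGroupType) (x : gT) m k : #[x] = (2 ^ m)%N ->
  #|'Ldiv_(2 ^ k)(<[x]>)| = (2 ^ (minn k m))%N.
Proof.
move=> ox.
have px : 2.-elt x by rewrite /p_elt ox pnatX.
have pX : 2.-group <[x]> by rewrite /pgroup -orderE.
rewrite -(OhmEabelian pX); last exact: abelianS (Ohm_sub k _) (cycle_abelian x).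
rewrite (Ohm_p_cycle _ px) -orderE ox pfactorK // orderXdiv; last first.
  by rewrite ox dvdn_exp2l // leq_subr.
rewrite ox -expnB ?leq_subr // ?expn_gt0 //; congr (expn 2 _).
rewrite /minn; case: ltnP => h; lia.
Qed.

Lemma psi_cycle (gT : finGroupType) (x : gT) m : #[x] = (2 ^ m)%N ->
  (3 * psi <[x]> = 2 * (2 ^ m * 2 ^ m) + 1)%N.
Proof.
move=> ox.
have oX : #|<[x]>| = (2 ^ m)%N by rewrite -orderE.
rewrite (@psiE _ _ m); last by move=> t Xt; rewrite -oX order_dvdG.
rewrite oX (eq_bigr (fun k : 'I_m => 2 ^ k * (2 ^ m - 2 ^ k))%N); last first.
  by move=> k _; rewrite (card_Ldiv_cycle _ ox) /minn ltn_ord.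
have := S_c (leqnn (2 ^ m)); have := expn_gt0 2 m.
move: (2 ^ m)%N (\sum_(k < m) 2 ^ k * (2 ^ m - 2 ^ k))%N => a S; nia.
Qed.

Lemma psi_lower (gT : finGroupType) (G : {group gT}) n : #|G| = (2 ^ n)%N -> 0 < n ->
  (forall k, 0 < k -> k < n -> #|'Ldiv_(2 ^ k)(G)| <= 2 ^ k.+1)%N ->
  (2 ^ n * 2 ^ n + 5 <= 3 * psi G)%N.
Proof.
move=> oG n0 hk.
rewrite (@psiE _ _ n); last by move=> t Gt; rewrite -oG order_dvdG.
have le : (\sum_(k < n) 2 ^ k * (2 ^ n - bnd k) <=
           \sum_(k < n) 2 ^ k * (2 ^ n - #|'Ldiv_(2 ^ k)(G)|))%N.
  apply: leq_sum => k _; rewrite leq_mul2l; apply/orP; right.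
  apply: leq_sub2l; rewrite /bnd; case: eqP => [k0 | /eqP k0].
    rewrite k0 expn0; apply: leq_trans (subset_leq_card (_ : _ \subset [1])) _.
      by apply/subsetP => t /LdivP [_]; rewrite expg1 => ->; rewrite inE.
    by rewrite cards1.
  by apply: hk; rewrite ?lt0n ?ltn_ord.
rewrite oG; have := S_b n0 (leqnn (2 ^ n)); have := expn_gt0 2 n.
move: le; move: (2 ^ n)%N (\sum_(k < n) 2 ^ k * (2 ^ n - bnd k))%N
   (\sum_(k < n) 2 ^ k * (2 ^ n - #|'Ldiv_(2 ^ k)(G)|))%N => a S T; nia.
Qed.


Lemma iso_conv (gT : finGroupType) (G : {group gT}) p1 p2 :
  (forall (rT : finGroupType) (H : {group rT}), Presentation.hom H p1 = Presentation.hom H p2) ->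
  Presentation.iso G p1 -> Presentation.iso G p2.
Proof. by move=> E iso rT H; rewrite iso E. Qed.

Lemma D8_conv (gT : finGroupType) (G : {group gT}) :
  G \isog 'D_8 -> is_D8 G.
Proof.
move=> iso; apply: (iso_conv _ (isoGrp_trans iso (Grp_2dihedral (isT : 1 < 3)))).
move=> rT H; apply/idP/idP; case/existsP=> -[x y] /= /eqP[dH x4 y2 xy];
  apply/existsP; exists (x, y); simpl; apply/eqP; congr (_, (_, (_, _))) => //.
- by rewrite -{2}(conjgK y x) xy conjVg invgK.
- by rewrite -{2}(conjgKV y x) xy conjVg invgK.
Qed.

Lemma Q_conv (gT : finGroupType) (G : {group gT}) n : 2 < n ->
  G \isog 'Q_(2 ^ n) -> is_Q G n.
Proof.
move=> n2 iso; apply: (iso_conv _ (isoGrp_trans iso (Grp_quaternion n2))).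
have e1 : (2 ^ n.-1 = 2 ^ (n - 2) * 2)%N by rewrite -expnSr; congr (expn 2 _); lia.
have e2 : n.-2 = n - 2 by lia.
move=> rT H; apply/idP/idP; case/existsP=> -[x y] /= /eqP[dH xq y2 xy];
  apply/existsP; exists (x, y); simpl; apply/eqP; congr (_, (_, (_, _))) => //.
- by rewrite y2 e2.
- by rewrite (expgM y 2 2) y2 e2 -expgM -e1.
- by rewrite -{2}(conjgK y x) xy conjVg invgK.
- by rewrite e1 expgM xq -expgM.
- by rewrite -xq e2.
- by rewrite -{2}(conjgKV y x) xy conjVg invgK.
Qed.

Lemma invg2 (rT : finGroupType) (y : rT) : y ^+ 2 = 1 -> y^-1 = y.
Proof. by move=> y2; apply/eqP; rewrite eq_invg_mul -expg2 y2. Qed.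

Lemma M_conv (gT : finGroupType) (G : {group gT}) n : 3 < n ->
  G \isog 'Mod_(2 ^ n) -> is_M G n.
Proof.
move=> n3 iso.
apply: (iso_conv _ (isoGrp_trans iso (Grp_modular_group (p := 2) (n := n) (isT : prime 2) (ltnW n3)))).
have e2 : (2 ^ n.-2).+1 = (2 ^ (n - 2) + 1)%N by rewrite addn1; congr (expn 2 _).+1; lia.
move=> rT H; apply/idP/idP; case/existsP=> -[x y] /= /eqP[dH xq y2 xy];
  apply/existsP; exists (x, y); simpl; apply/eqP; congr (_, (_, (_, _))) => //.
- by rewrite (invg2 y2) xy e2.
- by rewrite -(invg2 y2) xy e2.
Qed.

Lemma cyc_pres (gT : finGroupType) (G : {group gT}) (x : gT) k :
  G :=: <[x]> -> #[x] = (2 ^ k)%N -> is_cyclic2 G k.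
Proof.
move=> defG ox; apply: intro_isoGrp => [|rT H].
  apply/existsP; exists x; simpl; apply/eqP; congr (_, _).
    by rewrite defG.
  by apply/eqP; rewrite -order_dvdn ox.
case/existsP=> a /= /eqP[dH a2].
have d : #[a] %| #[x] by rewrite order_dvdn ox a2.
rewrite defG; apply/homgP; exists (eltm_morphism d).
by rewrite morphim_cycle ?cycle_id //= eltm_id.
Qed.

Lemma abel_pres (gT : finGroupType) (G : {group gT}) (x y : gT) k :
  <[x]> \x <[y]> = G -> #[x] = (2 ^ k.-1)%N -> #[y] = 2 -> is_cyc_x_C2 G k.
Proof.
move=> defG ox oy.
have [_ _ cyx _] := dprodP defG.
have cxy : commute y x.
  apply/cent1P; rewrite -cent_cycle; apply: (subsetP cyx); exact: cycle_id.
apply: intro_isoGrp => [|rT H].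
  apply/existsP; exists (x, y); simpl; apply/eqP; congr (_, (_, (_, _))).
  - exact: dprodWY defG.
  - by apply/eqP; rewrite -order_dvdn ox.
  - by apply/eqP; rewrite -order_dvdn oy.
  - by rewrite cxy.
case/existsP=> -[a b] /= /eqP[dH a1 b1 ab].
have da : #[a] %| #[x] by rewrite order_dvdn ox a1.
have db : #[b] %| #[y] by rewrite order_dvdn oy b1.
have cf : eltm_morphism db @* <[y]> \subset 'C(eltm_morphism da @* <[x]>).
  rewrite !morphim_cycle ?cycle_id //= !eltm_id cent_cycle cycle_subG.
  by apply/cent1P.
apply/homgP; exists (dprodm_morphism defG cf).
have [_ dxy _ _] := dprodP defG.
have := morphim_dprodm defG cf (subxx <[x]>) (subxx <[y]>); rewrite dxy => ->.
rewrite !morphim_cycle ?cycle_id //= !eltm_id.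
rewrite -dH cent_joinEr // cent_cycle cycle_subG; apply/cent1P; done.
Qed.

Lemma Mgroup_comm (gT : finGroupType) (G : {group gT}) :
  (forall H K : {group gT}, H \subset G -> K \subset G -> commute H K) -> Mgroup G.
Proof.
move=> hc H K L sH sK sL sHL.
rewrite (comm_joingE (hc H [group of K :&: L] sH _)); last by rewrite subIset ?sK.
by rewrite (comm_joingE (hc H K sH sK)) group_modl.
Qed.

Lemma Mgroup_abelian (gT : finGroupType) (G : {group gT}) : abelian G -> Mgroup G.
Proof.
move=> cG; apply: Mgroup_comm => H K sH sK; apply: normC.
apply: subset_trans sH _; apply: normal_norm.
by rewrite -sub_abelian_normal.
Qed.


Lemma sq_index2 (gT : finGroupType) (G H : {group gT}) t :
  H \subset G -> #|G : H| = 2 -> t \in G -> t ^+ 2 \in H.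
Proof.
move=> sHG iHG Gt; case Ht: (t \in H); first by rewrite groupX.
have tGH : t \in G :\: H by rewrite inE Ht Gt.
have defc := rcoset_index2 sHG iHG tGH.
apply/negPn/negP => Nt2.
have : t ^+ 2 \in G :\: H by rewrite inE Nt2 groupX.
rewrite -defc => /rcosetP [h Hh]; rewrite expgS expg1 => /mulIg eth.
by rewrite eth Hh in Ht.
Qed.

Lemma psi_split (gT : finGroupType) (G X : {set gT}) : X \subset G ->
  psi G = (psi X + \sum_(t in G :\: X) #[t])%N.
Proof.
move=> sXG; rewrite /psi (big_setID X) /=; congr (_ + _)%N.
by rewrite (setIidPr sXG).
Qed.

Lemma card_diff (gT : finGroupType) (G X : {set gT}) : X \subset G ->
  #|G :\: X| = (#|G| - #|X|)%N.
Proof. by move=> sXG; rewrite cardsD (setIidPr sXG). Qed.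

Lemma sum_const_order (gT : finGroupType) (A : {set gT}) c :
  {in A, forall t, #[t] = c} -> (\sum_(t in A) #[t] = c * #|A|)%N.
Proof.
move=> h; rewrite (eq_bigr (fun _ => c)); last by move=> t /h.
by rewrite sum_nat_const mulnC.
Qed.

Lemma pow_eq2 p a b : prime p -> (p ^ a = 2 ^ b)%N -> 0 < a -> p = 2 /\ a = b.
Proof.
move=> pp e a0.
have p2 : p = 2.
  have : p %| 2 ^ b by rewrite -e dvdn_exp.
  rewrite Euclid_dvdX // => /andP [d _].
  have := prime_gt1 pp; have := dvdn_leq (isT : 0 < 2) d; lia.
split=> //; subst p; apply/eqP; rewrite -(eqn_exp2l _ _ (isT : 1 < 2)) e //.
Qed.

Lemma Ldiv_cycle_eq (gT : finGroupType) (x : gT) m k : #[x] = (2 ^ m)%N -> k <= m ->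
  'Ldiv_(2 ^ k)(<[x]>) = <[x ^+ (2 ^ (m - k))]>.
Proof.
move=> ox km.
have px : 2.-elt x by rewrite /p_elt ox pnatX.
have pX : 2.-group <[x]> by rewrite /pgroup -orderE.
rewrite -(OhmEabelian pX); last exact: abelianS (Ohm_sub k _) (cycle_abelian x).
by rewrite (Ohm_p_cycle _ px) ox pfactorK.
Qed.

Lemma abel_comm (gT : finGroupType) (G : {group gT}) : abelian G ->
  {in G &, forall a b, commute a b}.
Proof. by move=> cG a b Ga Gb; apply: (centsP cG). Qed.

Lemma Ldiv_bound_ab (gT : finGroupType) (G X : {group gT}) m :
  abelian G -> X \subset G -> #|G| = (2 * #|X|)%N ->
  #|'Ldiv_m(G)| <= 2 * #|'Ldiv_m(X)|.
Proof.
move=> cG sXG oG.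
pose S := Group (group_Ldiv m cG).
have := mul_cardG S X.
have le1 : #|S * X| <= #|G|.
  by apply: subset_leq_card; rewrite mulG_subG sXG andbT subsetIl.
have e : S :&: X = 'Ldiv_m(X).
  by rewrite /= setIC setIA (setIidPl sXG).
rewrite e; have := cardG_gt0 X; move: le1; rewrite oG.
move: #|S * X| #|X| #|'Ldiv_m(X)| => a b c; simpl; nia.
Qed.

Lemma abelian_case (gT : finGroupType) (G : {group gT}) n x :
  #|G| = (2 ^ n)%N -> abelian G -> x \in G -> #[x] = (2 ^ n.-1)%N -> 0 < n ->
  exponent G = #[x] ->
  [/\ Mgroup G, (2 ^ n * 2 ^ n + 5 <= 3 * psi G)%N, 2 <= n & is_cyc_x_C2 G n].
Proof.
move=> oG cG Gx ox n0 eG.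
have n2 : 2 <= n.
  case: n n0 oG ox => // [[|n]] // _ oG ox.
  have : G :==: 1 by rewrite trivg_exponent eG ox.
  by move/eqP => G1; rewrite G1 cards1 in oG.
pose X := <[x]>%G.
have sXG : X \subset G by rewrite cycle_subG.
have oX : #|X| = (2 ^ n.-1)%N by rewrite -orderE.
have oGX : #|G| = (2 * #|X|)%N by rewrite oX oG -expnS prednK.
have iXG : #|G : X| = 2.
  by rewrite -divgS // oGX mulnK // cardG_gt0.
have [t Gt Xt] : exists2 t, t \in G & t \notin X.
  apply/subsetPn/negP => sGX; have := subset_leq_card sGX.
  have := cardG_gt0 X; rewrite oGX; lia.
have t2 : t ^+ 2 \in 'Ldiv_(2 ^ (n - 2))(X).
  rewrite inE (sq_index2 sXG iXG Gt) /= inE -expgM -expnS.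
  have -> : (n - 2).+1 = n.-1 by lia.
  by rewrite -ox -eG expg_exponent.
rewrite (Ldiv_cycle_eq (k := n - 2) ox) in t2; last by lia.
have e1 : (n.-1 - (n - 2) = 1)%N by lia.
rewrite e1 expn1 in t2.
case/cycleP: t2 => i t2i.
pose y := t * (x ^+ i)^-1.
have Gxi : x ^+ i \in G by rewrite groupX.
have Gy : y \in G by rewrite groupM ?groupV.
have y2 : y ^+ 2 = 1.
  rewrite /y expgMn; last by apply: (abel_comm cG); rewrite ?groupV.
  by rewrite expVgn t2i -!expgM (mulnC i 2) mulgV.
have Xy : y \notin X.
  apply: contra Xt => Xy.
  have -> : t = y * x ^+ i by rewrite /y mulgKV.
  by rewrite groupM // mem_cycle.
have oy : #[y] = 2.
  apply: nt_prime_order => //; apply: contraNneq Xy => ->; exact: group1.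
have TI : <[y]> :&: X = 1.
  by apply: prime_TIg; rewrite ?cycle_subG // -orderE oy.
have cyX : <[y]> \subset 'C(X).
  by apply: sub_abelian_cent2 cG _ sXG; rewrite cycle_subG.
have defG : X \x <[y]> = G.
  rewrite dprodE ?(setIC X) //; apply/eqP.
  rewrite eqEcard mulG_subG sXG cycle_subG Gy /= TI_cardMg ?(setIC X) //.
  have oY : #|<[y]>%G| = 2 by rewrite /= -orderE oy.
  by rewrite oY oGX mulnC.
split.
- exact: Mgroup_abelian.
- apply: psi_lower oG n0 _ => k k0 kn.
  apply: leq_trans (Ldiv_bound_ab _ cG sXG oGX) _.
  rewrite (card_Ldiv_cycle _ ox) expnS leq_mul2l /= leq_exp2l //.
  exact: geq_minl.
- exact: n2.
- exact: abel_pres defG ox oy.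
Qed.

Lemma Mgroup_crit (gT : finGroupType) (G A : {group gT}) z :
  abelian A -> G^`(1) \subset <[z]> ->
  (forall H : {group gT}, H \subset G -> z \notin H -> H \subset A) -> Mgroup G.
Proof.
move=> cA sG' hA; apply: Mgroup_comm => H K sH sK.
have nrm : forall L : {group gT}, L \subset G -> z \in L -> L <| G.
  move=> L sL zL; apply: sub_der1_normal => //.
  by apply: subset_trans sG' _; rewrite cycle_subG.
case zK: (z \in K).
  by apply: normC; apply: subset_trans sH (normal_norm (nrm K sK zK)).
case zH: (z \in H).
  by apply/esym/normC; apply: subset_trans sK (normal_norm (nrm H sH zH)).
apply: normC; apply: cents_norm; apply: sub_abelian_cent2 cA _ _.
  by apply: hA; rewrite ?zH.
by apply: hA; rewrite ?zK.
Qed.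

Lemma cyc_inv_in (gT : finGroupType) (x : gT) m (H : {group gT}) :
  #[x] = (2 ^ m.+1)%N -> H :&: <[x]> != 1 -> x ^+ (2 ^ m) \in H.
Proof.
move=> ox /trivgPn [w /setIP [Hw Xw] w1].
have : #[w] %| 2 ^ m.+1 by rewrite -ox (dvdn_trans (order_dvdG Xw)) // -orderE.
case/dvdn_pfactor => // a am ow.
have a0 : 0 < a by case: a ow {am} => // ow; move: w1; rewrite -order_eq1 ow.
have ow' : #[w ^+ (2 ^ a.-1)] = 2.
  rewrite orderXdiv ow ?dvdn_exp2l ?leq_pred //.
  by rewrite -{1}(prednK a0) expnS mulnK // expn_gt0.
have : w ^+ (2 ^ a.-1) \in 'Ldiv_(2 ^ 1)(<[x]>).
  by rewrite inE groupX // inE expn1 -order_dvdn ow'.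
rewrite (Ldiv_cycle_eq ox) // subSS subn0.
have oz : #[x ^+ (2 ^ m)] = 2.
  by rewrite orderXdiv ox ?dvdn_exp2l // expnS mulnK // expn_gt0.
rewrite cycle2g // !inE => /orP [/eqP e | /eqP <-].
  by move: ow'; rewrite e order1.
by rewrite groupX.
Qed.

Lemma modular_case (gT : finGroupType) (G : {group gT}) n :
  #|G| = (2 ^ n)%N -> extremal_class G = ModularGroup ->
  [/\ Mgroup G, (2 ^ n * 2 ^ n + 5 <= 3 * psi G)%N, 4 <= n & is_M G n].
Proof.
move=> oG /modular_group_classP [p pp [n' n'ge iso]].
have n'2 : 2 < n' by move: n'ge; case: (p == 2) => /=; lia.
have := card_isog iso; rewrite card_modular_group // oG => e.
have [p2 en] := pow_eq2 pp (esym e) (ltnW (ltnW n'2)); subst p n'.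
have n4 : 4 <= n by move: n'ge.
have [[x y] genG modG] := generators_modular_group pp n'2 iso.
have [[_ _ _] _ [defG' _ _] _ hOhm] := modular_group_structure pp n'2 genG iso modG.
have {}hOhm : forall k, 0 < k < n.-1 ->
    <[x ^+ (2 ^ (n - k.+1))]> \x <[y]> = 'Ohm_k(G) /\ #|'Ohm_k(G)| = (2 ^ k.+1)%N.
  by move: hOhm; case: eqP => // [[n3]]; lia.
have [oG' Gx ox /setDP [Gy Xy]] := genG.
have [pG maxX nXG _ _] := extremal_generators_facts pp genG.
have sXG : <[x]> \subset G by rewrite cycle_subG.
have iXG : #|G : <[x]>| = 2.
  by rewrite -divgS // oG -orderE ox -{1}(prednK (ltnW (ltnW n'2))) expnS mulnK // expn_gt0.
have [defO1 oO1] := hOhm 1%N (ltac:(apply/andP; split; lia)).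
split => //; last exact: M_conv.
- apply: (@Mgroup_crit _ G ('Ohm_1(G))%G (x ^+ (2 ^ n.-2))).
  + have [_ <- cyx _] := dprodP defO1.
    by rewrite abelianM !cycle_abelian.
  + by rewrite defG'.
  move=> H sHG zH.
  have TI : H :&: <[x]> = 1.
    apply/eqP; apply: contraNT zH => ntH.
    have ox' : #[x] = (2 ^ (n.-2).+1)%N by rewrite ox; congr (expn 2 _); lia.
    exact: cyc_inv_in ox' ntH.
  apply/subsetP => h Hh /=; rewrite (OhmE 1 pG) mem_gen // inE (subsetP sHG) //= inE expn1.
  have : h ^+ 2 \in H :&: <[x]> by rewrite inE groupX // (sq_index2 sXG iXG) ?(subsetP sHG).
  by rewrite TI inE.
- apply: (psi_lower oG) => [|k k0 kn]; first lia.
  case: (ltnP k n.-1) => kn1.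
    have [_ oOk] := hOhm k (ltac:(apply/andP; split; lia)).
    rewrite -oOk; apply: subset_leq_card.
    by rewrite (OhmE k pG) subset_gen.
  apply: leq_trans (subset_leq_card (subsetIl G _)) _.
  by rewrite oG leq_exp2l //; lia.
Qed.


Lemma ext_psi (gT : finGroupType) (G : {group gT}) n x y :
  extremal_generators G 2 n (x, y) -> 1 < n ->
  [/\ <[x]> \subset G, #|G : <[x]>| = 2, #|G :\: <[x]>| = (2 ^ n.-1)%N,
      (3 * psi <[x]> = 2 * (2 ^ n.-1 * 2 ^ n.-1) + 1)%N
    & psi G = (psi <[x]> + \sum_(t in G :\: <[x]>) #[t])%N].
Proof.
move=> genG n1; have [oG Gx ox _] := genG.
have sXG : <[x]> \subset G by rewrite cycle_subG.
have e : (2 ^ n = 2 * 2 ^ n.-1)%N by rewrite -expnS prednK // ltnW.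
split => //.
- by rewrite -divgS // oG -orderE ox e mulnK // expn_gt0.
- rewrite card_diff // oG -orderE ox e; lia.
- exact: psi_cycle.
- exact: psi_split.
Qed.

Lemma bound77 q S P C c q0 : (3 * C = 2 * (2 * q * (2 * q)) + 1)%N ->
  (3 * P = 2 * (q * q) + 1 + 3 * S)%N -> (S <= c * q)%N -> (q0 <= q)%N ->
  (231 * c + 46 <= 94 * q0)%N -> (77 * P <= 31 * C)%N.
Proof. move=> hC hP hS hq hc; nia. Qed.

Lemma psiC_val n : (3 * psiC (2 ^ n) = 2 * (2 ^ n * 2 ^ n) + 1)%N.
Proof.
rewrite /psiC /Zp; case: ifP => [n1 | ]; last first.
  case: n => [|n]; last by rewrite expnS; have := expn_gt0 2 n; lia.
  move=> _; rewrite /psi big_set1 order1 //.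
rewrite Zp_cycle (@psi_cycle _ _ n) // order_Zp1 Zp_cast //.
Qed.

Lemma pow_inj a b : (2 ^ a = 2 ^ b)%N -> a = b.
Proof. by move=> e; apply/eqP; rewrite -(eqn_exp2l _ _ (isT : 1 < 2)) e. Qed.

Lemma hC_q n : 0 < n -> (3 * psiC (2 ^ n) = 2 * (2 * 2 ^ n.-1 * (2 * 2 ^ n.-1)) + 1)%N.
Proof. by move=> n0; rewrite psiC_val -expnS prednK. Qed.

Lemma q_ge n k : k <= n.-1 -> (2 ^ k <= 2 ^ n.-1)%N.
Proof. by move=> h; rewrite leq_exp2l. Qed.

Lemma dih_case (gT : finGroupType) (G : {group gT}) n :
  #|G| = (2 ^ n)%N -> 2 < n -> extremal_class G = Dihedral ->
  (77 * psi G <= 31 * psiC (2 ^ n))%N \/ [/\ n = 3, psi G = 19%N & is_D8 G].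
Proof.
move=> oG n2 /dihedral_classP [n' n'1 iso].
have := card_isog iso; rewrite card_2dihedral // oG => /pow_inj en; subst n'.
have [[x y] genG _] := generators_2dihedral n'1 iso.
have [[_ o2 _] _ _ _ _] := dihedral2_structure n'1 genG iso.
have [sXG iXG cD pX psiG] := ext_psi genG n'1.
rewrite (sum_const_order o2) cD in psiG.
have hC := hC_q (ltnW (ltnW n2)).
case: (ltngtP n 3) => [|n3|n3]; first lia.
  left; apply: (@bound77 _ (2 * 2 ^ n.-1) _ _ 2 (2 ^ 3) hC); [|by rewrite mulnC|apply: q_ge; lia|done].
  by rewrite psiG mulnDr pX.
right; subst n; split => //; last exact: D8_conv.
move: pX; rewrite psiG /=; lia.
Qed.

Lemma quat_case (gT : finGroupType) (G : {group gT}) n :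
  #|G| = (2 ^ n)%N -> 2.-group G -> extremal_class G = Quaternion ->
  (77 * psi G <= 31 * psiC (2 ^ n))%N \/
  [/\ n = 3, psi G = 27%N, Mgroup G & is_Q G 3] \/ [/\ n = 4, psi G = 75%N & is_Q G 4].
Proof.
move=> oG pG /quaternion_classP [n' n'2 iso].
have := card_isog iso; rewrite card_quaternion // oG => /pow_inj en; subst n'.
have [[x y] genG [oy y2 xy]] := generators_quaternion n'2 iso.
have [[_ o4 _] [defG' _ _ _] [_ _ inv _ _] _ _] := quaternion_structure n'2 genG iso.
have [sXG iXG cD pX psiG] := ext_psi genG (ltnW n'2).
rewrite (sum_const_order o4) cD in psiG.
have hC := hC_q (ltnW (ltnW n'2)).
case: (ltngtP n 4) => [n4|n4|n4].
- have n3 : n = 3 by lia.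
  subst n; right; left; split => //; last exact: Q_conv.
    by move: pX; rewrite psiG /=; lia.
  apply: (@Mgroup_crit _ G 1%G (x ^+ 2)); first exact: abelian1.
    by rewrite defG'.
  move=> H sHG zH; apply/negPn/negP => ntH.
  have ntH' : H != 1 :> {set gT} by apply: contra ntH => /eqP ->.
  have [pr2 d2 _] := pgroup_pdiv (pgroupS sHG pG) ntH'.
  have [u Hu ou] := Cauchy pr2 d2.
  have := inv u (subsetP sHG u Hu) ou; move=> e; rewrite -e in zH.
  by rewrite Hu in zH.
- left; apply: (@bound77 _ (4 * 2 ^ n.-1) _ _ 4 (2 ^ 4) hC); [|by rewrite mulnC|apply: q_ge; lia|done].
  by rewrite psiG mulnDr pX.
- subst n; right; right; split => //; last exact: Q_conv.
  by move: pX; rewrite psiG /=; lia.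
Qed.

Lemma sd_case (gT : finGroupType) (G : {group gT}) n :
  #|G| = (2 ^ n)%N -> extremal_class G = SemiDihedral ->
  (77 * psi G <= 31 * psiC (2 ^ n))%N.
Proof.
move=> oG /semidihedral_classP [n' n'3 iso].
have := card_isog iso; rewrite card_semidihedral // oG => /pow_inj en; subst n'.
have [[x y] genG [oy xy]] := generators_semidihedral n'3 iso.
have [[_ _ invXX] _ _ _ _] := semidihedral_structure n'3 genG iso oy.
have [sXG iXG cD pX psiG] := ext_psi genG (ltnW (ltnW n'3)).
have hC := hC_q (ltnW (ltnW (ltnW n'3))).
have [_ Gx ox XYy] := genG.
set r := (2 ^ n.-2)%N in invXX.
have r0 : 0 < r by rewrite expn_gt0.
have eq : (2 ^ n.-1 = 2 * r)%N by rewrite /r -expnS; congr (expn 2 _); lia.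
have yV : y^-1 = y by apply: invg2; rewrite -oy expg_order.
have S3 : (\sum_(t in G :\: <[x]>) #[t] <= 3 * 2 ^ n.-1)%N.
  rewrite -(rcoset_index2 sXG iXG XYy) -rcosetE /rcoset big_imset /=; last first.
    by move=> a b _ _; apply: mulIg.
  apply: (@leq_trans (\sum_(z in <[x]>) (2 + 2 * ((z ^+ r)%g != 1%g : nat)))%N).
    apply: leq_sum => z Xz.
    have sq : (z * y) ^+ 2 = z ^+ r.
      rewrite expgS expg1 -mulgA -{1}yV mulgA -mulgA -conjgE.
      rewrite (invXX z y Xz XYy) -expgS prednK //.
    have z4 : z ^+ (r * 2) = 1.
      apply/eqP; rewrite -order_dvdn mulnC -eq -ox.
      by have := order_dvdG Xz; rewrite -orderE.
    case: eqP => zr.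
      rewrite muln0 addn0; apply: dvdn_leq => //.
      by rewrite order_dvdn sq zr.
    rewrite muln1; apply: dvdn_leq => //.
    by rewrite order_dvdn (expgM _ 2 2) sq -expgM z4.
  rewrite big_split /= -big_distrr /= sum_neq_card sum_nat_const -orderE ox.
  have cL : #|'Ldiv_r(<[x]>)| = r.
    by rewrite /r (card_Ldiv_cycle _ ox); congr (expn 2 _); lia.
  rewrite cL eq; lia.
apply: (@bound77 _ (\sum_(t in G :\: <[x]>) #[t]) _ _ 3 (2 ^ 3) hC) => //.
- by rewrite psiG mulnDr pX.
- by apply: q_ge; lia.
Qed.


Definition classif (gT : finGroupType) (G : {group gT}) n :=
  let P := psi G in let C := psiC (2 ^ n) in
  (77 * P <= 31 * C)%N \/
  (P = C /\ Mgroup G /\ is_cyclic2 G n) \/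
  (Mgroup G /\ (2 ^ n * 2 ^ n + 5 <= 3 * P)%N /\
        ((2 <= n /\ is_cyc_x_C2 G n) \/ (4 <= n /\ is_M G n))) \/
  [/\ n = 3, P = 19 & is_D8 G] \/
  [/\ n = 3, P = 27, Mgroup G & is_Q G 3] \/ [/\ n = 4, P = 75 & is_Q G 4].

Lemma classify (gT : finGroupType) (G : {group gT}) n :
  2.-group G -> #|G| = (2 ^ n)%N -> classif G n.
Proof.
move=> pG oG.
have [x Gx ex] := exponent_witness (pgroup_nil pG).
have : #[x] %| 2 ^ n by rewrite -oG order_dvdG.
case/dvdn_pfactor => // j jn ox.
rewrite /classif.
have hC := psiC_val n.
case: (leqP (j + 2) n) => [jn2 | jn2].
  left.
  have hP : (psi G <= 2 ^ n * 2 ^ j)%N.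
    rewrite /psi -oG -sum_nat_const; apply: leq_sum => t Gt.
    by rewrite -ox -ex dvdn_leq ?exponent_gt0 // dvdn_exponent.
  have h4 : (4 * 2 ^ j <= 2 ^ n)%N.
    by rewrite (_ : 4 = 2 ^ 2)%N // -expnD leq_exp2l // addnC.
  move: hP h4 hC; move: (psi G) (psiC (2 ^ n)) (2 ^ n)%N (2 ^ j)%N => P C a b.
  nia.
have sXG : <[x]> \subset G by rewrite cycle_subG.
have [jn' | jn'] : j < n \/ j = n by lia.
  have ej : j = n.-1 by lia.
  have n0 : 0 < n by lia.
  have oxn : #[x] = (2 ^ n.-1)%N by rewrite ox ej.
  have iXG : #|G : <[x]>| = 2.
    by rewrite -divgS // oG -orderE oxn -{1}(prednK n0) expnS mulnK // expn_gt0.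
  case cG: (abelian G).
    have [hM hl n2 hc] := abelian_case oG cG Gx oxn n0 ex.
    by right; right; left; split => //; split => //; left.
  have := maximal_cycle_extremal pG (negbT cG) (cycle_cyclic x) sXG iXG.
  case/orP => [/eqP mod | /andP [_ e2]].
    have [hM hl n4 hc] := modular_case oG mod.
    by right; right; left; split => //; split => //; right.
  have n3 : 2 < n.
    rewrite ltnNge; apply: contra (negbT cG) => n2.
    by apply: (p2group_abelian pG); rewrite oG pfactorK.
  move: e2; rewrite /extremal2 /=.
  case E: (extremal_class G) => //= _.
  + case: (dih_case oG n3 E) => [h | h]; first by left.
    by right; right; right; left.
  + by left; apply: sd_case oG E.
  + case: (quat_case oG pG E) => [h | [h | h]]; first by left.
      by right; right; right; right; left.
    by right; right; right; right; right.
have defG : G :=: <[x]>.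
  by apply/eqP; rewrite eq_sym eqEcard sXG /= oG -orderE ox jn'.
right; left; split.
  apply/eqP; rewrite -(eqn_pmul2l (isT : 0 < 3)) hC.
  by rewrite defG (@psi_cycle _ _ n) // ox jn'.
split.
  by apply: Mgroup_abelian; rewrite defG cycle_abelian.
by apply: cyc_pres defG _; rewrite ox jn'.
Qed.

Lemma rat_lt (a b c d : nat) : (0 < b)%N -> (0 < d)%N ->
  ((a%:R / b%:R < c%:R / d%:R :> rat)%R = (a * d < c * b)%N).
Proof.
move=> b0 d0.
by rewrite ltr_pdivrMr ?ltr0n // mulrAC ltr_pdivlMr ?ltr0n // -!natrM ltr_nat.
Qed.

Lemma rat_eq (a b c d : nat) : (0 < b)%N -> (0 < d)%N ->
  (a%:R / b%:R = c%:R / d%:R :> rat)%R -> (a * d = c * b)%N.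
Proof.
move=> b0 d0 /eqP; rewrite eqr_div ?pnatr_eq0 -?lt0n // -!natrM.
by move/eqP/(congr1 (fun q : rat => q)) => /eqP; rewrite eqr_nat => /eqP.
Qed.

Local Close Scope group_scope.

Theorem proposition3p3 (gT : finGroupType) (G : {group gT}) (H2 : pgroup 2 G) :
  ((19%:R / 43%:R < psi' G)%R ->
     Mgroup G /\
     ((exists k : nat, is_cyclic2 G k)
      \/ (exists k : nat, (2 <= k)%N /\ is_cyc_x_C2 G k)
      \/ (exists k : nat, (4 <= k)%N /\ is_M G k)
      \/ is_Q G 3)) /\
  (psi' G = (19%:R / 43%:R)%R -> is_D8 G) /\
  ((31%:R / 77%:R < psi' G)%R -> (psi' G < 19%:R / 43%:R)%R -> is_Q G 4).
Proof.
have oG := card_pgroup H2; move: (logn 2 #|G|) oG => n oG.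
have hc := classify H2 oG.
rewrite /psi' oG.
have hC := psiC_val n.
have C0 : (0 < psiC (2 ^ n))%N by have := expn_gt0 2 n; lia.
move: hc; rewrite /classif.
move: (psi G) (psiC (2 ^ n)) hC C0 => P C hC C0.
have hA : (0 < 2 ^ n * 2 ^ n)%N by rewrite muln_gt0 expn_gt0.
have e3 : n = 3 -> (2 ^ n * 2 ^ n = 64)%N by move=> ->.
have e4 : n = 4 -> (2 ^ n * 2 ^ n = 256)%N by move=> ->.
move: (2 ^ n * 2 ^ n)%N hC hA e3 e4 => A hC hA e3 e4.
have T : forall Q1 Q2 Q3 : Prop,
   ((19 * C < P * 43)%N -> Q1) -> ((P * 43)%N = (19 * C)%N -> Q2) ->
   ((31 * C < P * 77)%N -> (P * 43 < 19 * C)%N -> Q3) ->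
   ((19%:R / 43%:R < P%:R / C%:R :> rat)%R -> Q1) /\
   ((P%:R / C%:R = 19%:R / 43%:R :> rat)%R -> Q2) /\
   ((31%:R / 77%:R < P%:R / C%:R :> rat)%R -> (P%:R / C%:R < 19%:R / 43%:R :> rat)%R -> Q3).
  move=> Q1 Q2 Q3 h1 h2 h3; split; [|split].
  - by move=> h; apply: h1; rewrite rat_lt // in h.
  - by move=> h; apply: h2; apply: rat_eq h.
  - by move=> h h'; apply: h3; rewrite rat_lt // in h; rewrite rat_lt // in h'.
case=> [h1 | [[hPC [hM hcy]] | [[hM [hlow hor]] | [[n3 P19 hD] | [[n3 P27 hM hQ] | [n4 P75 hQ]]]]]];
  apply: T => *; try (exfalso; lia).
- by split=> //; left; exists n.
- split=> //; case: hor => [[n2 hh] | [n4 hh]].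
    by right; left; exists n.
  by right; right; left; exists n.
- done.
- by split=> //; right; right; right.
- done.
Qed.
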